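(* For $i\in\{0,1\}$, let $N_i\subseteq W({\rm G}_2)$ be the stabilizer of the root $\beta_i$ under the action of $W({\rm G}_2)$ on $\Psi^+$ described in the context. Then for every $a\in N_i$ we have $ae_ia^{-1}=e_i$ in ${\rm Br}({\rm G}_2)$.
   Context: Let $\delta$ be an indeterminate. ${\rm Br}({\rm G}_2)$ is the $\mathbb{Z}[\delta^{\pm1}]$-algebra generated by $r_0,r_1,e_0,e_1$ subject to the following relations: - $r_0^2=r_1^2=1$; - $r_ie_i=e_ir_i=e_i$ for $i=0,1$; - $e_0^2=\delta^3e_0$ and $e_1^2=\delta e_1$; - $r_0e_1e_0=r_1e_0$ and $e_0e_1r_0=e_0r_1$; - $e_1r_0e_1r_0e_1=e_1$ and $e_1r_0e_1r_0r_1=e_1r_0r_1r_0$; - $e_0r_1e_0=\delta^2e_0$; - $r_1r_0e_1r_0e_1=r_0r_1r_0e_1$; - $(r_1r_0)^6=1$. Let $\Psi$ be a root system of type ${\rm G}_2$ with simple roots $\beta_0$ (short) and $\beta_1$ (long), and positive roots $\Psi^+=\{\beta_0,\beta_1,\beta_0+\beta_1,2\beta_0+\beta_1,3\beta_0+\beta_1,3\beta_0+2\beta_1\}$. $W({\rm G}_2)$ is generated by the reflections $s_0,s_1$ in $\beta_0,\beta_1$. It acts on $\Psi^+$ by $w\cdot\beta=$ the unique element of $\Psi^+\cap\{\pm w\beta\}$. The subgroup of units of ${\rm Br}({\rm G}_2)$ generated by $r_0,r_1$ is isomorphic to $W({\rm G}_2)$ via $r_i\mapsto s_i$. Through this isomorphism,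 elements of $W({\rm G}_2)$ are regarded as elements of ${\rm Br}({\rm G}_2)$. *)

(* Defs.v *)
From HB Require Import structures.
From mathcomp Require Import all_boot all_order all_algebra.
Set Implicit Arguments. Unset Strict Implicit. Unset Printing Implicit Defensive.
Import Order.TTheory GRing.Theory Num.Theory.
Local Open Scope ring_scope.

(* A root c0*beta0 + c1*beta1 is encoded as the pair (c0, c1) : int * int.
   beta0 short, beta1 long; Cartan integers <beta1,beta0^v> = -3,
   <beta0,beta1^v> = -1. *)
Definition root := (int * int)%type.
Definition beta (i : 'I_2) : root := if val i == 0%N then (1, 0) else (0, 1).

Definition sref (i : 'I_2) (v : root) : root :=
  if val i == 0%N then (- v.1 + 3 * v.2, v.2) else (v.1, v.1 - v.2).

(* Elements of W(G2) are given by words in s_0, s_1; the word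
   [:: i1; ...; ik] denotes s_{i1} ... s_{ik}. *)
Definition wlin (w : seq 'I_2) (v : root) : root := foldr sref v w.

Definition posroots : seq root := [:: (1,0); (0,1); (1,1); (2,1); (3,1); (3,2)].

Definition wact (w : seq 'I_2) (b : root) : root :=
  let v := wlin w b in if v \in posroots then v else (- v.1, - v.2).

Definition in_stab (i : 'I_2) (w : seq 'I_2) : bool := wact w (beta i) == beta i.

(* An equation holds in Br(G2) iff it holds for every
   ring A with a central unit d and elements satisfying the relations
   (universal property of the presentation).  *)
Definition r_ (A : pzRingType) (r0 r1 : A) (i : 'I_2) : A :=
  if val i == 0%N then r0 else r1.
Definition e_ (A : pzRingType) (e0 e1 : A) (i : 'I_2) : A :=
  if val i == 0%N then e0 else e1.

Definition BrG2_rel (A : pzRingType) (d r0 r1 e0 e1 : A) : Prop :=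
  (* Z[d^{+-1}]-algebra structure: d is a central unit *)
  (forall x : A, d * x = x * d) /\
  (exists d' : A, d * d' = 1 /\ d' * d = 1) /\
  r0 * r0 = 1 /\ r1 * r1 = 1 /\
  r0 * e0 = e0 /\ e0 * r0 = e0 /\ r1 * e1 = e1 /\ e1 * r1 = e1 /\
  e0 * e0 = d ^+ 3 * e0 /\ e1 * e1 = d * e1 /\
  r0 * e1 * e0 = r1 * e0 /\ e0 * e1 * r0 = e0 * r1 /\
  e1 * r0 * e1 * r0 * e1 = e1 /\
  e1 * r0 * e1 * r0 * r1 = e1 * r0 * r1 * r0 /\
  e0 * r1 * e0 = d ^+ 2 * e0 /\
  r1 * r0 * e1 * r0 * e1 = r0 * r1 * r0 * e1 /\
  (r1 * r0) ^+ 6 = 1.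

Definition rword (A : pzRingType) (r0 r1 : A) (w : seq 'I_2) : A :=
  \prod_(j <- w) r_ r0 r1 j.

(* Main.v *)
Require Import Defs.
From mathcomp Require Import all_boot all_order all_algebra.
Import GRing.Theory.
Local Open Scope ring_scope.

Definition i0 : 'I_2 := @Ordinal 2 0 isT.
Definition i1 : 'I_2 := @Ordinal 2 1 isT.

Definition nfw (k : nat) : seq 'I_2 :=
  match k with
  | 0 => [::]
  | 1 => [:: i0]
  | 2 => [:: i1]
  | 3 => [:: i0; i1]
  | 4 => [:: i1; i0]
  | 5 => [:: i0; i1; i0]
  | 6 => [:: i1; i0; i1]
  | 7 => [:: i0; i1; i0; i1]
  | 8 => [:: i1; i0; i1; i0]
  | 9 => [:: i0; i1; i0; i1; i0]
  | 10 => [:: i1; i0; i1; i0; i1]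
  | _ => [:: i1; i0; i1; i0; i1; i0]
  end.

Definition step0 (k : nat) : nat :=
  match k with
  | 0 => 1 | 1 => 0 | 2 => 3 | 3 => 2 | 4 => 5 | 5 => 4 | 6 => 7 | 7 => 6
  | 8 => 9 | 9 => 8 | 10 => 11 | _ => 10 end.
Definition step1 (k : nat) : nat :=
  match k with
  | 0 => 2 | 1 => 4 | 2 => 0 | 3 => 6 | 4 => 1 | 5 => 8 | 6 => 3 | 7 => 10
  | 8 => 5 | 9 => 11 | 10 => 7 | _ => 9 end.
Definition step (j : 'I_2) k := if val j == 0%N then step0 k else step1 k.

Lemma rword_rev (A : pzRingType) (r0 r1 : A) :
  r0 * r0 = 1 -> r1 * r1 = 1 ->
  forall w, rword r0 r1 w * rword r0 r1 (rev w) = 1.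
Proof.
move=> h0 h1; elim=> [|j w IH]; first by rewrite /rword !big_nil mulr1.
rewrite rev_cons -cats1 /rword big_cat big_cons big_cons big_nil /=.
rewrite -/(rword r0 r1 w) -/(rword r0 r1 (rev w)).
rewrite mulr1 mulrA -(mulrA (r_ r0 r1 j)) IH mulr1.
by case: j => [[|[|]]] //= _.
Qed.

Lemma nf_exists (A : pzRingType) (r0 r1 : A) :
  r0 * r0 = 1 -> r1 * r1 = 1 ->
  r0*r1*r0*r1*r0*r1 = r1*r0*r1*r0*r1*r0 ->
  forall w, exists k, (k < 12)%N /\ rword r0 r1 w = rword r0 r1 (nfw k) /\
    forall i, wlin w (beta i) = wlin (nfw k) (beta i).
Proof.
move=> h0 h1 B.
have K0 : forall x, x * r0 * r0 = x by move=> x; rewrite -mulrA h0 mulr1.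
have K1 : forall x, x * r1 * r1 = x by move=> x; rewrite -mulrA h1 mulr1.
elim=> [|j w [k [Hk [IHr IHw]]]]; first by exists 0%N; split.
exists (step j k); split; last split.
- by rewrite /step; case: (val j == 0%N); do 12 (try (case: k Hk IHr IHw => [|k] Hk IHr IHw //)).
- rewrite /rword big_cons -/(rword r0 r1 w) IHr.
  rewrite /step /r_; case: (val j == 0%N);
  do 12 (try (case: k Hk IHr IHw => [|k] Hk IHr IHw //));
  rewrite /rword /= !big_cons ?big_nil /r_ /i0 /i1 /= ?big_nil /= ?mulr1 ?mulrA ?h0 ?h1 ?mul1r ?B ?K0 //.
- move=> i /=; rewrite IHw.
  rewrite /step /sref /beta; case: (val j == 0%N); case: (val i == 0%N);
  do 12 (try (case: k Hk IHr IHw => [|k] Hk IHr IHw //)).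
Qed.

(* a = rword w, and a^{-1} = rword (rev w) since r_i^2 = 1 *)
Theorem lemma9p4 (A : pzRingType) (d r0 r1 e0 e1 : A) :
  BrG2_rel d r0 r1 e0 e1 ->
  forall (i : 'I_2) (w : seq 'I_2), in_stab i w ->
    rword r0 r1 w * e_ e0 e1 i * rword r0 r1 (rev w) = e_ e0 e1 i.
Proof.
move=> [_ [_ [rr0 [rr1 [r0e0 [e0r0 [r1e1 [e1r1 [_ [_ [R5 [R6 [R9 [R8 [_ [R7 R12]]]]]]]]]]]]]]]].
have K0 : forall x, x * r0 * r0 = x by move=> x; rewrite -mulrA rr0 mulr1.
have K1 : forall x, x * r1 * r1 = x by move=> x; rewrite -mulrA rr1 mulr1.
have B : r0*r1*r0*r1*r0*r1 = r1*r0*r1*r0*r1*r0.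
  have h6 : (r1*r0)^+6 = r1*r0*r1*r0*r1*r0*r1*r0*r1*r0*r1*r0.
    by rewrite !exprS expr0 mulr1 !mulrA.
  rewrite -[r0*r1*r0*r1*r0*r1]mul1r -R12 h6 !mulrA.
  by do 6 rewrite ?K0 ?K1.
have L5 : forall x, x * r1 * e0 = x * r0 * e1 * e0.
  by move=> x; rewrite -[x * r1 * e0]mulrA -R5 !mulrA.
have Lr1e1 : forall x, x * r1 * e1 = x * e1 by move=> x; rewrite -mulrA r1e1.
have Lr0e0 : forall x, x * r0 * e0 = x * e0 by move=> x; rewrite -mulrA r0e0.
have Le1r1 : forall x, x * e1 * r1 = x * e1 by move=> x; rewrite -mulrA e1r1.
have L7 : forall x, x * r1 * r0 * e1 * r0 * e1 = x * r0 * r1 * r0 * e1.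
  by move=> x; have := congr1 (fun y => x * y) R7; rewrite /= !mulrA.
have Te0 : r1*r0*r1*r0*r1*e0 = e0.
  by rewrite L5 K0 Lr1e1 -L5 rr1 mul1r.
have e0T : e0*r1*r0*r1*r0*r1 = e0.
  by rewrite -R6 K0 Le1r1 R6 K1.
have Se1 : forall x, x*r0*r1*r0*r1*r0*e1 = x*e1*r0*e1.
  by move=> x; rewrite -L7 K1 K0.
have e1S : forall x, x*e1*r0*r1*r0*r1*r0 = x*e1*r0*e1.
  by move=> x; have := congr1 (fun y => x*y*r1*r0) R8; rewrite /= !mulrA K1 K0 => <-.
move=> i w Hall.
have [k [Hk [Hr Hw]]] := @nf_exists A r0 r1 rr0 rr1 B w.
have Hrev : rword r0 r1 (rev w) = rword r0 r1 (rev (nfw k)).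
  have I1 := @rword_rev A r0 r1 rr0 rr1 (nfw k).
  have I2 := @rword_rev A r0 r1 rr0 rr1 (rev w); rewrite revK in I2.
  by rewrite -[LHS]mulr1 -I1 mulrA -Hr I2 mul1r.
rewrite /in_stab /wact Hw in Hall.
rewrite Hr Hrev.
move: Hall; rewrite /e_; case: i => [[|[|//]] Hi] /=;
do 12 (try (case: k Hk Hr Hw Hrev => [|k] Hk Hr Hw Hrev //)); move=> _;
rewrite /rword /= ?big_cons ?big_nil /r_ /i0 /i1 /= ?mulr1 ?mul1r ?mulrA;
first [ done
      | by rewrite r0e0 e0r0
      | by rewrite Te0 e0T
      | by rewrite Lr0e0 Te0 e0r0 e0T
      | by rewrite r1e1 e1r1
      | by have := Se1 1; rewrite !mul1r => ->; rewrite e1S R9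
      | by rewrite Se1 r1e1 e1S R9 e1r1 ].
Qed.
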